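(* Let $r$ be a Hermitian symmetric polynomial in one complex variable $z$ and let $r^*$ be its reflection. Then $r\in\mathcal{Q}(1)$ if and only if $r^*\in\mathcal{Q}(1)$, and $r\in\mathcal{Q}'(1)$ if and only if $r^*\in\mathcal{Q}'(1)$.
   Context: If $r(z,\overline z)=\sum c_{jk}z^j\overline z^k$ has degree $m$ in $z$ (largest $j$ with some $c_{jk}\ne0$), its reflection is the Hermitian symmetric polynomial $r^*(z,\overline z)=|z|^{2m}r(1/z,1/\overline z)$. $\mathcal{Q}(1)$: Hermitian symmetric $r$ with $r=\|F\|^2/\|G\|^2$ for holomorphic polynomial mappings $F,G$, $G\not\equiv0$. $\mathcal{Q}'(1)$: $r$ with $r(z,\overline z)\ge0$ for all $z$ such that there exist a Hermitian symmetric $s\ge0$, not identically $0$, and a holomorphic polynomial mapping $F$ with $rs=\|F\|^2$. *)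

(* Defs.v *)
From mathcomp Require Import all_boot all_algebra.
From mathcomp Require Import complex reals.
Set Implicit Arguments. Unset Strict Implicit. Unset Printing Implicit Defensive.
Import GRing.Theory Num.Theory.
Local Open Scope ring_scope.
Local Open Scope complex_scope.

(* A polynomial r(z, zbar) = \sum_{j,k < n} c_{jk} z^j zbar^k in one complex
   variable is represented by its (square, zero-padded) coefficient matrix
   c : 'M[R[i]]_n, with c j k the coefficient of z^j zbar^k. *)
Definition heval (R : realType) (n : nat) (c : 'M[R[i]]_n) (z : R[i]) : R[i] :=
  \sum_(j < n) \sum_(k < n) c j k * z ^+ j * (z^*) ^+ k.

Definition hermitian_sym (R : realType) (n : nat) (c : 'M[R[i]]_n) : Prop :=
  forall j k : 'I_n, c k j = (c j k)^*.

(* Degree of r in z: the largest j with some c_{jk} != 0 (0 for r = 0). *)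
Definition zdeg (R : realType) (n : nat) (c : 'M[R[i]]_n) : nat :=
  \max_(j < n | [exists k : 'I_n, c j k != 0]) (j : nat).

(* Reflection r^*(z, zbar) = |z|^{2m} r(1/z, 1/zbar), m = zdeg r; as a
   polynomial this is \sum_{j,k <= m} c_{m-j, m-k} z^j zbar^k. *)
Definition hreflect (R : realType) (n : nat) (c : 'M[R[i]]_n) : 'M[R[i]]_n :=
  let m := zdeg c in
  \matrix_(j < n, k < n)
    (if (j <= m)%N && (k <= m)%N then c (insubd j (m - j)%N) (insubd k (m - k)%N) else 0).

Definition sqnorm (R : realType) (N : nat) (F : 'I_N -> {poly R[i]}) (z : R[i])
  : R[i] := \sum_(i < N) (F i).[z] * ((F i).[z])^*.

(* Q(1): r = ||F||^2 / ||G||^2 with F, G holomorphic polynomial mappings,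
   G not identically 0 (identity of rational functions, i.e.
   r ||G||^2 = ||F||^2 identically). *)
Definition inQ1 (R : realType) (n : nat) (c : 'M[R[i]]_n) : Prop :=
  exists (N M : nat) (F : 'I_N -> {poly R[i]}) (G : 'I_M -> {poly R[i]}),
    (exists i, G i != 0) /\
    forall z : R[i], heval c z * sqnorm G z = sqnorm F z.

Definition inQ1' (R : realType) (n : nat) (c : 'M[R[i]]_n) : Prop :=
  (forall z : R[i], 0 <= heval c z) /\
  exists (p : nat) (s : 'M[R[i]]_p),
    hermitian_sym s /\ (forall z : R[i], 0 <= heval s z) /\
    (exists z : R[i], heval s z != 0) /\
    exists (N : nat) (F : 'I_N -> {poly R[i]}),
      forall z : R[i], heval c z * heval s z = sqnorm F z.

(* Main.v *)
Require Import Defs.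
From mathcomp Require Import all_boot all_algebra.
From mathcomp Require Import complex reals.
From mathcomp Require Import all_order ring lra zify.
Set Implicit Arguments. Unset Strict Implicit. Unset Printing Implicit Defensive.
Import GRing.Theory Num.Theory Order.TTheory.
Local Open Scope ring_scope.
Local Open Scope complex_scope.

Section S.
Variable R : realType.
Local Notation C := R[i].

Lemma Cnorm_real (x : C) : `|x| = (complex.Re `|x|)%:C.
Proof. by rewrite RRe_real // normr_real. Qed.

Lemma tpow_le (t : R) (i : nat) : 0 < t -> t <= 1 ->
  `|(t%:C) ^+ i - 0 ^+ i| <= t%:C.
Proof.
move=> t0 t1; case: i => [|i].
  by rewrite !expr0 subrr normr0 ler0c ltW.
rewrite expr0n /= subr0 normrX ger0_norm; last by rewrite ler0c ltW.
rewrite -rmorphXn lecR.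
rewrite exprS -[leRHS]mulr1 ler_wpM2l ?(ltW t0) //.
by rewrite exprn_ile1 // ltW.
Qed.

Lemma poly_cont (p : {poly C}) (e : R) : 0 < e ->
  exists t : R, 0 < t /\ `|p.[t%:C] - p.[0]| < e%:C.
Proof.
move=> e0.
set B := \sum_(i < size p) `|p`_i|.
have B0 : 0 <= B by apply: sumr_ge0 => i _; exact: normr_ge0.
have BR : B = (complex.Re B)%:C by rewrite RRe_real // ger0_real.
set b := complex.Re B.
have b0 : 0 <= b by rewrite -ler0c -BR.
exists (Num.min 1 (e / (b + 1))).
have b1 : 0 < b + 1 by lra.
have tpos : 0 < Num.min 1 (e / (b + 1)) by rewrite lt_min ltr01 divr_gt0.
split => //.
set t := Num.min 1 (e / (b + 1)) in tpos *.
have t1 : t <= 1 by rewrite ge_min lexx.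
have te : t <= e / (b + 1) by rewrite ge_min lexx orbT.
have tb : t * b < e.
  have : t * (b + 1) <= e by rewrite -ler_pdivlMr.
  nra.
rewrite !horner_coef -sumrB.
apply: (le_lt_trans (ler_norm_sum _ _ _)).
apply: (@le_lt_trans _ _ (B * t%:C)).
  rewrite /B mulr_suml; apply: ler_sum => i _.
  by rewrite -mulrBr normrM ler_wpM2l // tpow_le.
by rewrite BR -rmorphM ltcR mulrC.
Qed.


Lemma cont_nz (p : {poly C}) : p.[0] != 0 ->
  exists t : R, 0 < t /\ p.[t%:C] != 0.
Proof.
move=> p0.
have hR : `|p.[0]| = (complex.Re `|p.[0]|)%:C by apply: Cnorm_real.
have e0 : 0 < complex.Re `|p.[0]| by rewrite -ltcR -hR normr_gt0.
have [t [t0 ht]] := poly_cont p e0.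
exists t; split => //; apply/negP => /eqP pt.
by move: ht; rewrite pt sub0r normrN -hR ltxx.
Qed.

Lemma cont_zero (p : {poly C}) : (forall t : R, 0 < t -> p.[t%:C] = 0) -> p.[0] = 0.
Proof.
move=> h; apply/eqP; apply/negPn/negP => /cont_nz [t [t0]].
by rewrite h // eqxx.
Qed.

Lemma cont_ge0 (p : {poly C}) : (forall t : R, 0 < t -> 0 <= p.[t%:C]) -> 0 <= p.[0].
Proof.
move=> h; set x := p.[0].
suff : x = `|x| by move->; exact: normr_ge0.
apply/eqP; rewrite -subr_eq0; apply/negP => /negP d0.
set d := x - `|x| in d0.
have hR : `|d| = (complex.Re `|d|)%:C by apply: Cnorm_real.
have e0 : 0 < complex.Re `|d| / 2 by rewrite divr_gt0 // -ltcR -hR normr_gt0.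
have [t [t0 ht]] := poly_cont p e0.
set y := p.[t%:C] in ht.
have y0 : y = `|y| by rewrite ger0_norm // h.
have : `|d| <= `|y - x| + `|y - x|.
  rewrite /d.
  have -> : x - `|x| = (x - y) + (`|y| - `|x|) by rewrite -y0; ring.
  apply: (le_trans (ler_normD _ _)); apply: lerD.
    by rewrite distrC.
  exact: ler_dist_dist.
move=> H.
have H2 : (complex.Re `|d| / 2)%:C + (complex.Re `|d| / 2)%:C <= `|d|.
  rewrite -rmorphD [X in _ <= X]hR lecR.
  set e := complex.Re _; lra.
by have := le_lt_trans H (lt_le_trans (ltrD ht ht) H2); rewrite ltxx.
Qed.


Lemma conjc_real_pos (t : R) : (t%:C)^* = t%:C.
Proof. exact: conjc_real. Qed.

Definition hpoly n (c : 'M[C]_n) : {poly C} :=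
  \sum_(j < n) \sum_(k < n) c j k *: 'X^(j + k).

Lemma heval_real n (c : 'M[C]_n) z : Num.conj z = z -> heval c z = (hpoly c).[z].
Proof.
move=> hz; rewrite /heval /hpoly horner_sum; apply: eq_bigr => j _.
rewrite horner_sum; apply: eq_bigr => k _.
by rewrite hornerZ hornerXn hz exprD mulrA.
Qed.

Definition sqpoly N (F : 'I_N -> {poly C}) : {poly C} :=
  \sum_(i < N) F i * map_poly Num.conj (F i).

Lemma sqnorm_real N (F : 'I_N -> {poly C}) z : Num.conj z = z -> sqnorm F z = (sqpoly F).[z].
Proof.
move=> hz; rewrite /sqnorm /sqpoly horner_sum; apply: eq_bigr => i _.
by rewrite hornerM -{4}hz horner_map.
Qed.

Lemma expr_rev (z : C) e i : z != 0 -> (i <= e)%N -> z ^+ (e - i) = z ^+ e * (z^-1) ^+ i.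
Proof.
move=> z0 hie; rewrite exprVn -{2}(subnK hie) exprD mulfK // expf_neq0 //.
Qed.

Definition rv (e : nat) (p : {poly C}) : {poly C} :=
  \sum_(i < size p) p`_i *: 'X^(e - i).

Lemma rv_eval e (p : {poly C}) (z : C) : z != 0 -> (size p <= e.+1)%N -> (rv e p).[z] = z ^+ e * p.[z^-1].
Proof.
move=> z0 hs; rewrite /rv horner_sum horner_coef mulr_sumr; apply: eq_bigr => i _.
rewrite hornerZ hornerXn expr_rev //; last first.
  by have := ltn_ord i; move: hs; clear; lia.
by rewrite mulrCA.
Qed.

Lemma rv_neq0 e (p : {poly C}) : p != 0 -> (size p <= e.+1)%N -> rv e p != 0.
Proof.
move=> p0 hs.
have sp : (0 < size p)%N by rewrite size_poly_gt0.
have ho : ((size p).-1 < size p)%N by rewrite ltn_predL.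
apply/negP => /eqP h.
have : (rv e p)`_(e - (size p).-1) = lead_coef p.
  rewrite /rv coef_sum (bigD1 (Ordinal ho)) //=.
  rewrite coefZ coefXn eqxx mulr1 big1 ?addr0 //.
  move=> i /eqP hi; rewrite coefZ coefXn.
  case: eqP => [h'|]; last by rewrite mulr0.
  exfalso; apply: hi; apply: val_inj => /=.
  move: (ltn_ord i) h' hs sp; move: (nat_of_ord i) => k; case: (size p) => // s' /=; clear; lia.
by rewrite h coef0 => /esym/eqP; rewrite lead_coef_eq0 (negbTE p0).
Qed.


Lemma sqnorm_rv N (F : 'I_N -> {poly C}) e (z : C) : z != 0 ->
  (forall i, size (F i) <= e.+1)%N ->
  sqnorm (fun i => rv e (F i)) z = (z * Num.conj z) ^+ e * sqnorm F z^-1.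
Proof.
move=> z0 hF; rewrite /sqnorm mulr_sumr; apply: eq_bigr => i _.
rewrite rv_eval // rmorphM rmorphXn exprMn.
by rewrite mulrACA.
Qed.

Definition hs (N : nat) (f : nat -> nat -> C) (z : C) : C :=
  \sum_(j < N) \sum_(k < N) f j k * z ^+ j * (Num.conj z) ^+ k.

Lemma hs_eq N f f' z : (forall j k, (j < N)%N -> (k < N)%N -> f j k = f' j k) ->
  hs N f z = hs N f' z.
Proof.
move=> h; apply: eq_bigr => j _; apply: eq_bigr => k _; by rewrite h.
Qed.

Lemma hs_widen N N' f z : (N <= N')%N ->
  (forall j k, (N <= j)%N || (N <= k)%N -> f j k = 0) -> hs N' f z = hs N f z.
Proof.
move=> hN h; rewrite /hs (big_ord_widen _ (fun j => \sum_(k < N) f j k * z ^+ j * Num.conj z ^+ k) hN).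
rewrite [RHS]big_mkcond; apply: eq_bigr => j _.
case: ifP => hj.
  rewrite (big_ord_widen _ (fun k => f j k * z ^+ j * Num.conj z ^+ k) hN).
  rewrite [RHS]big_mkcond; apply: eq_bigr => k _.
  case: ifP => hk //; by rewrite h ?mul0r // (leqNgt N k) hk orbT.
by apply: big1 => k _; rewrite h ?mul0r // (leqNgt N j) hj.
Qed.

Lemma hs_rev E f (z : C) : z != 0 ->
  hs E.+1 (fun j k => f (E - j)%N (E - k)%N) z = (z * Num.conj z) ^+ E * hs E.+1 f z^-1.
Proof.
move=> z0.
have cz0 : Num.conj z != 0 by rewrite conjC_eq0.
rewrite /hs mulr_sumr (reindex_inj rev_ord_inj); apply: eq_bigr => j _.
rewrite mulr_sumr (reindex_inj rev_ord_inj); apply: eq_bigr => k _.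
rewrite /= !subSS.
have hj : (j <= E)%N by rewrite -ltnS.
have hk : (k <= E)%N by rewrite -ltnS.
rewrite !subKn //.
rewrite (expr_rev z0 hj) (expr_rev cz0 hk).
rewrite fmorphV exprMn.
ring.
Qed.


Lemma refl_id n (c : 'M[C]_n) : hermitian_sym c -> forall z : C, z != 0 ->
  heval (hreflect c) z = (z * Num.conj z) ^+ (zdeg c) * heval c z^-1.
Proof.
case: n c => [|n'] c hc z z0.
  by rewrite /heval !big_ord0 mulr0.
have hm : (zdeg c <= n')%N.
  by rewrite /zdeg; apply/bigmax_leqP => j _; rewrite -ltnS ltn_ord.
have vj : forall j k : 'I_n'.+1, (zdeg c < j)%N -> c j k = 0.
  move=> j k hj; apply/eqP; apply/negP => /negP h.
  have : (j <= zdeg c)%N.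
    rewrite /zdeg; apply: (leq_bigmax_cond (F := fun j : 'I_n'.+1 => nat_of_ord j)).
    by apply/existsP; exists k.
  by rewrite leqNgt hj.
have vk : forall j k : 'I_n'.+1, (zdeg c < k)%N -> c j k = 0.
  by move=> j k hk; rewrite hc vj // conjc0.
set m := zdeg c in hm vj vk *.
set g := fun j k : nat => if (j <= m)%N && (k <= m)%N then c (inord j) (inord k) else 0.
have gv : forall j k, (m.+1 <= j)%N || (m.+1 <= k)%N -> g j k = 0.
  move=> j k; rewrite /g !ltnNge => /orP [] /negbTE -> //; by rewrite andbF.
have Hc : forall w, heval c w = hs m.+1 g w.
  move=> w; rewrite -(@hs_widen m.+1 n'.+1) //.
  rewrite /heval /hs; apply: eq_bigr => j _; apply: eq_bigr => k _.
  rewrite /g; case: ifP => [/andP [_ _]|]; first by rewrite !inord_val.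
  move/negbT; rewrite negb_and -!ltnNge => /orP [hj|hk].
    by rewrite vj.
  by rewrite vk.
have Hr : heval (hreflect c) z = hs m.+1 (fun j k => g (m - j)%N (m - k)%N) z.
  transitivity (hs m.+1 (fun j k => if (j <= m)%N && (k <= m)%N then g (m - j)%N (m - k)%N else 0) z); last first.
    by apply: hs_eq => j k; rewrite !ltnS => -> ->.
  rewrite -(@hs_widen m.+1 n'.+1) //; last first.
    by move=> j k; rewrite !ltnNge => /orP [] /negbTE -> //; rewrite andbF.
  rewrite /heval /hs; apply: eq_bigr => j _; apply: eq_bigr => k _.
  rewrite /hreflect mxE -/m; case: ifP => // _.
  rewrite /g !leq_subr /=.
  have e1 : forall (i : 'I_n'.+1), insubd i (m - i)%N = inord (m - i).
    move=> i; have hi : (m - i < n'.+1)%N by rewrite ltnS (leq_trans (leq_subr _ _) hm).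
    by apply: val_inj; rewrite val_insubd hi /= inordK.
  by rewrite !e1.
by rewrite Hr hs_rev // Hc.
Qed.


Lemma zz_inv (z : C) : z != 0 -> (z * Num.conj z) * (z^-1 * Num.conj z^-1) = 1.
Proof.
move=> z0; have cz0 : Num.conj z != 0 by rewrite conjC_eq0.
have cv : Num.conj (z^-1) = (Num.conj z)^-1 by exact: fmorphV.
by rewrite cv mulrACA divff // mul1r mulfV.
Qed.

Lemma refl_id' n (c : 'M[C]_n) : hermitian_sym c -> forall z : C, z != 0 ->
  heval c z = (z * Num.conj z) ^+ (zdeg c) * heval (hreflect c) z^-1.
Proof.
move=> hc z z0; rewrite (refl_id hc (invr_neq0 z0)) invrK mulrA -exprMn.
by rewrite zz_inv // expr1n mul1r.
Qed.

Lemma zz_ge0 (z : C) : 0 <= z * Num.conj z.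
Proof. exact: mulcJ_ge0. Qed.

Lemma zz_neq0 (z : C) : z != 0 -> z * Num.conj z != 0.
Proof. by move=> z0; rewrite mulf_neq0 // conjC_eq0. Qed.

Lemma real_conj (t : R) : Num.conj (t%:C) = t%:C.
Proof. exact: conjc_real. Qed.

Lemma realC_neq0 (t : R) : 0 < t -> t%:C != 0.
Proof. by move=> t0; rewrite -(rmorph0 (real_complex R)) (inj_eq (@complexI _)) gt_eqF. Qed.

Lemma Q1_transfer n1 (a : 'M[C]_n1) n2 (b : 'M[C]_n2) m :
  (forall z : C, z != 0 -> heval a z = (z * Num.conj z) ^+ m * heval b z^-1) ->
  inQ1 b -> inQ1 a.
Proof.
move=> hab [N [M [F [G [[i0 Gi0] hb]]]]].
set d := (\max_i size (F i) + \max_i size (G i))%N.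
have hF : forall i, (size (F i) <= (m + d).+1)%N.
  move=> i; apply: (leq_trans (@leq_bigmax _ (fun i => size (F i)) i)); rewrite /d; lia.
have hG : forall i, (size (G i) <= d.+1)%N.
  move=> i; apply: (leq_trans (@leq_bigmax _ (fun i => size (G i)) i)); rewrite /d; lia.
exists N, M, (fun i => rv (m + d) (F i)), (fun i => rv d (G i)); split.
  by exists i0; apply: rv_neq0.
have off0 : forall z : C, z != 0 ->
    heval a z * sqnorm (fun i => rv d (G i)) z = sqnorm (fun i => rv (m + d) (F i)) z.
  move=> z z0; rewrite hab // !sqnorm_rv // -hb exprD.
  set u := (z * _) ^+ m; set v := (z * _) ^+ d; ring.
move=> z; case: (eqVneq z 0) => [->|z0]; last exact: off0.
apply/eqP; rewrite -subr_eq0; apply/eqP.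
rewrite heval_real ?conjC0 // !sqnorm_real ?conjC0 //.
rewrite -hornerM -hornerN -hornerD.
apply: cont_zero => t t0.
rewrite hornerD hornerN hornerM -heval_real ?real_conj // -!sqnorm_real ?real_conj //.
by rewrite off0 ?subrr // realC_neq0.
Qed.


Lemma nonneg_transfer n1 (a : 'M[C]_n1) n2 (b : 'M[C]_n2) m :
  (forall z : C, z != 0 -> heval a z = (z * Num.conj z) ^+ m * heval b z^-1) ->
  (forall z, 0 <= heval b z) -> forall z, 0 <= heval a z.
Proof.
move=> hab hb.
have off : forall z : C, z != 0 -> 0 <= heval a z.
  by move=> z z0; rewrite hab // mulr_ge0 // exprn_ge0 // zz_ge0.
move=> z; case: (eqVneq z 0) => [->|z0]; last exact: off.
rewrite heval_real ?conjC0 //; apply: cont_ge0 => t t0.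
by rewrite -heval_real ?real_conj //; apply: off; apply: realC_neq0.
Qed.

Lemma pad_refl p' (s : 'M[C]_p'.+1) E : (p' <= E)%N -> hermitian_sym s ->
  exists s' : 'M[C]_E.+1, hermitian_sym s' /\
    forall z : C, z != 0 -> heval s' z = (z * Num.conj z) ^+ E * heval s z^-1.
Proof.
move=> hE hsy.
set g := fun j k : nat => if (j < p'.+1)%N && (k < p'.+1)%N then s (inord j) (inord k) else 0.
exists (\matrix_(j < E.+1, k < E.+1) g (E - j)%N (E - k)%N); split.
  move=> j k; rewrite !mxE /g [in RHS]andbC; case: ifP => _; first exact: hsy.
  by rewrite conjc0.
move=> z z0.
have Hs : forall w, heval s w = hs E.+1 g w.
  move=> w; rewrite (@hs_widen p'.+1 E.+1) //; last first.
    by move=> j k; rewrite /g !ltnNge => /orP [] /negbTE -> //; rewrite andbF.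
  rewrite /heval /hs; apply: eq_bigr => j _; apply: eq_bigr => k _.
  by rewrite /g !ltn_ord /= !inord_val.
rewrite Hs -hs_rev //.
by rewrite /heval /hs; apply: eq_bigr => j _; apply: eq_bigr => k _; rewrite mxE.
Qed.

Lemma Q1'_transfer n1 (a : 'M[C]_n1) n2 (b : 'M[C]_n2) m :
  (forall z : C, z != 0 -> heval a z = (z * Num.conj z) ^+ m * heval b z^-1) ->
  inQ1' b -> inQ1' a.
Proof.
move=> hab [bge0 [p [s [hsy [sge0 [[z0 sz0] [N [F hF]]]]]]]].
split; first exact: nonneg_transfer hab bge0.
case: p s hsy sge0 z0 sz0 hF => [|p'] s hsy sge0 z0 sz0 hF.
  by move: sz0; rewrite /heval big_ord0 eqxx.
set d := (\max_i size (F i))%N.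
set E := (p' + d)%N.
have [s' [hs' es']] := @pad_refl p' s E (leq_addr d p') hsy.
have [z1 [z1n0 sz1]] : exists z1 : C, z1 != 0 /\ heval s z1 != 0.
  case: (eqVneq z0 0) => [e0|]; last by exists z0.
  move: sz0; rewrite e0 heval_real ?conjC0 // => /cont_nz [t [t0 ht]].
  exists t%:C; split; first exact: realC_neq0.
  by rewrite heval_real ?real_conj.
have off : forall z : C, z != 0 -> 0 <= heval s' z.
  by move=> z z0'; rewrite es' // mulr_ge0 // exprn_ge0 // zz_ge0.
exists E.+1, s'; split => //; split.
  move=> z; case: (eqVneq z 0) => [->|z0']; last exact: off.
  rewrite heval_real ?conjC0 //; apply: cont_ge0 => t t0.
  by rewrite -heval_real ?real_conj //; apply: off; apply: realC_neq0.
split.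
  exists z1^-1; rewrite es' ?invr_neq0 // invrK mulf_neq0 // expf_neq0 //.
  by rewrite zz_neq0 // invr_neq0.
have hF' : forall i, (size (F i) <= (m + E).+1)%N.
  move=> i; apply: (leq_trans (@leq_bigmax _ (fun i => size (F i)) i)); rewrite /E /d; lia.
exists N, (fun i => rv (m + E) (F i)).
have off0 : forall z : C, z != 0 ->
    heval a z * heval s' z = sqnorm (fun i => rv (m + E) (F i)) z.
  move=> z z0'; rewrite hab // es' // sqnorm_rv // -hF exprD.
  set u := (z * _) ^+ m; set v := (z * _) ^+ E; ring.
move=> z; case: (eqVneq z 0) => [->|z0']; last exact: off0.
apply/eqP; rewrite -subr_eq0; apply/eqP.
rewrite !heval_real ?conjC0 // !sqnorm_real ?conjC0 //.
rewrite -hornerM -hornerN -hornerD.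
apply: cont_zero => t t0.
rewrite hornerD hornerN hornerM -!heval_real ?real_conj // -!sqnorm_real ?real_conj //.
by rewrite off0 ?subrr // realC_neq0.
Qed.

End S.

Theorem lemma4p1 (R : realType) (n : nat) (r : 'M[R[i]]_n) :
  hermitian_sym r ->
  (inQ1 r <-> inQ1 (hreflect r)) /\ (inQ1' r <-> inQ1' (hreflect r)).
Proof.
move=> hr; split; split.
- exact: Q1_transfer (refl_id hr).
- exact: Q1_transfer (refl_id' hr).
- exact: Q1'_transfer (refl_id hr).
- exact: Q1'_transfer (refl_id' hr).
Qed.
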